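(* Consider the $d$-level Nested Logit model and the experiment design $\mathcal{S}$ described in the context, and suppose the $d$-level general position assumption (described in the context) holds. Let $S \in \mathcal{S}$ and $i,j \in S$. Then: (I) if $j$ is a child of $N^{\mathrm{par}}(i)$, then $\mathsf{BF}(i,S) = \mathsf{BF}(j,S)$; (II) if $j$ is not a child of $N^{\mathrm{par}}(i)$ and there exists a child $k$ of $N^{\mathrm{par}}(i)$ with $k \notin S$, then $\mathsf{BF}(i,S) \neq \mathsf{BF}(j,S)$.
   Context: Items: $[n]=\{1,\dots,n\}$, $n \ge 2$. Experiment design: fix an integer base $b \ge 2$, let $L = \lceil \log_b n \rceil$, fix an injective map $\sigma: [n] \to \{0,\dots,b-1\}^L$ with coordinates $\sigma_\ell(i)$, let $S_{\ell,-d} = \{i \in [n] : \sigma_\ell(i) \neq d\}$ for $\ell \in \{1,\dots,L\}$, $d \in \{0,\dots,b-1\}$, and $\mathcal{S} = \{S_{\ell,-d}\}_{\ell,d}$; the control assortment $[n]$ is also offered. $d$-level Nested Logit model: the items are the leaves of a rooted tree $\mathcal{T}$ of depth $d \ge 1$ in which every leaf is at depth $d$; internal nodes are called nests. For each item $i$, $r = a_0(i) \to a_1(i) \to \cdots \to a_d(i) = i$ is the root-to-leaf path, and $N^{\mathrm{par}}(i) = a_{d-1}(i)$ is the parent of $i$. For a node $N$, $\mathrm{Ch}(N)$ is its set of children and $\mathrm{Leaf}(N)$ the set of leaves in its subtree; for an assortment $S$ we write $N \cap S$ for $\mathrm{Leaf}(N) \cap S$. Each item has a weight $v_i > 0$ and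 each internal node $N$ a parameter $\lambda_N \in (0,1]$. For $S \subseteq [n]$: $v_i(S) = v_i$ if $i \in S$ and $0$ otherwise; for internal $N$, $v_N(S) = (\sum_{K \in \mathrm{Ch}(N)} v_K(S))^{\lambda_N}$; for $K \in \mathrm{Ch}(N)$, $P(K \mid N, S) = v_K(S)/\sum_{L' \in \mathrm{Ch}(N)} v_{L'}(S)$; and $\phi(i,S) = \prod_{h=0}^{d-1} P(a_{h+1}(i) \mid a_h(i), S)$ for $i \in S$. For a node $N$, $P(N \mid S) = \sum_{i \in \mathrm{Leaf}(N) \cap S} \phi(i,S)$. Boost factor: $\mathsf{BF}(i,S) = \phi(i,S)/\phi(i,[n])$. $d$-level general position assumption: for every $S \in \mathcal{S}$ and any two distinct internal nodes $N \neq N'$ with $N \cap S \neq \emptyset$ and $N' \cap S \neq \emptyset$, and such that $N \cap S \subsetneq \mathrm{Leaf}(N)$ or $N' \cap S \subsetneq \mathrm{Leaf}(N')$, we have $\frac{P(N \mid S)}{P(N \mid [n])} \cdot \frac{\sum_{K \in \mathrm{Ch}(N)} v_K([n])}{\sum_{K \in \mathrm{Ch}(N)} v_K(S)} \neq \frac{P(N' \mid S)}{P(N' \mid [n])} \cdot \frac{\sum_{K \in \mathrm{Ch}(N')} v_K([n])}{\sum_{K \in \mathrm{Ch}(N')} v_K(S)}$. *)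

(* Defs.v *)
From HB Require Import structures.
From mathcomp Require Import all_boot all_order all_algebra.
From mathcomp Require Import reals exp.
Set Implicit Arguments. Unset Strict Implicit. Unset Printing Implicit Defensive.
Import Order.TTheory GRing.Theory Num.Theory.
Local Open Scope ring_scope.

(* A d-level nested logit model on items 'I_n (item k stands for k+1).
   The tree is encoded level-wise: [nl_blk h i] is Leaf(a_h(i)), the set of
   leaves below the depth-h ancestor of item i.  A node of the tree is the
   pair (h, B) of its depth h and its leaf set B = nl_blk h i. *)
Record nlmodel (R : realType) (n : nat) := NLModel {
  nl_d   : nat;
  nl_blk : nat -> 'I_n -> {set 'I_n};
  nl_v   : 'I_n -> R;
  nl_lam : nat -> {set 'I_n} -> R
}.

Section NL.
Variables (R : realType) (n : nat) (M : nlmodel R n).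
Local Notation d := (nl_d M).
Local Notation blk := (nl_blk M).
Local Notation v := (nl_v M).
Local Notation lam := (nl_lam M).

Definition nl_valid : Prop :=
  [/\ (0 < d)%N,
      (forall h i, (h <= d)%N -> i \in blk h i),
      (forall h i j, (h <= d)%N -> j \in blk h i -> blk h j = blk h i)
    & (forall h i, (h < d)%N -> blk h.+1 i \subset blk h i)] /\
  [/\ (forall i, blk 0 i = setT),
      (forall i, blk d i = [set i]),
      (forall i, 0 < v i)
    & (forall h i, (h < d)%N -> 0 < lam h (blk h i) <= 1)].

Definition is_internal (h : nat) (B : {set 'I_n}) : bool :=
  (h < d)%N && [exists i, blk h i == B].

Definition children (h : nat) (B : {set 'I_n}) : {set {set 'I_n}} :=
  [set blk h.+1 j | j in B].

Definition vleaf (i : 'I_n) (S : {set 'I_n}) : R := if i \in S then v i else 0.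

(* v_N(S) for the node N = (h, B), computed by recursion on m = d - h;
   at a leaf B = [set i], so the sum is v_i(S). *)
Fixpoint vnode (m h : nat) (B : {set 'I_n}) (S : {set 'I_n}) : R :=
  match m with
  | 0 => \sum_(i in B) vleaf i S
  | m'.+1 => (\sum_(C in children h B) vnode m' h.+1 C S) `^ (lam h B)
  end.

Definition vN (h : nat) (B S : {set 'I_n}) : R := vnode (d - h) h B S.

Definition chsum (h : nat) (B S : {set 'I_n}) : R :=
  \sum_(C in children h B) vN h.+1 C S.

(* phi(i, S) = prod_{h<d} P(a_{h+1}(i) | a_h(i), S) *)
Definition phi (i : 'I_n) (S : {set 'I_n}) : R :=
  \prod_(h < d) (vN h.+1 (blk h.+1 i) S / chsum h (blk h i) S).

Definition PN (h : nat) (B S : {set 'I_n}) : R := \sum_(i in B :&: S) phi i S.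

Definition BF (i : 'I_n) (S : {set 'I_n}) : R := phi i S / phi i setT.

Definition gp_ratio (h : nat) (B S : {set 'I_n}) : R :=
  PN h B S / PN h B setT * (chsum h B setT / chsum h B S).

Definition general_position (design : {set {set 'I_n}}) : Prop :=
  forall S, S \in design ->
  forall h B h' B', is_internal h B -> is_internal h' B' ->
    (h, B) <> (h', B') ->
    B :&: S != set0 -> B' :&: S != set0 ->
    (B :&: S \proper B) || (B' :&: S \proper B') ->
    gp_ratio h B S != gp_ratio h' B' S.

End NL.

(* Experiment design: base b, L = ceil(log_b n) = up_log b n, an injective
   sigma : [n] -> {0..b-1}^L; S_{l,-dd} = {i | sigma_l(i) <> dd}. *)
Definition S_design (n b : nat) (sigma : 'I_n -> {ffun 'I_(up_log b n) -> 'I_b})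
  (l : 'I_(up_log b n)) (dd : 'I_b) : {set 'I_n} :=
  [set i | sigma i l != dd].

Definition design (n b : nat) (sigma : 'I_n -> {ffun 'I_(up_log b n) -> 'I_b})
  : {set {set 'I_n}} :=
  [set S_design sigma l dd | l : 'I_(up_log b n), dd : 'I_b].

(* Main.v *)
Require Import Defs.
From HB Require Import structures.
From mathcomp Require Import all_boot all_order all_algebra.
From mathcomp Require Import reals exp.
From mathcomp Require Import ring lra.
Import Order.TTheory GRing.Theory Num.Theory.
Local Open Scope ring_scope.
Set Implicit Arguments.

Definition Qf (R : realType) (n : nat) (M : nlmodel R n) (l : 'I_n) (S : {set 'I_n}) : R :=
  \prod_(h < (nl_d M).-1)
     (vN M h.+1 (nl_blk M h.+1 l) S / chsum M h (nl_blk M h l) S).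

Lemma nest (R : realType) (n : nat) (M : nlmodel R n) : nl_valid M ->
  forall l g h, (g <= h)%N -> (h <= nl_d M)%N -> nl_blk M h l \subset nl_blk M g l.
Proof.
move=> [[d0 c1 c2 c3] [c4 c5 c6 c7]] l g; elim=> [|h IH].
  by rewrite leqn0 => /eqP -> _.
move=> gh hd; rewrite leq_eqVlt in gh; case/orP: gh => [/eqP -> //|gh].
apply: subset_trans (c3 h l hd) (IH gh (ltnW hd)).
Qed.

Lemma blk_eq (R : realType) (n : nat) (M : nlmodel R n) : nl_valid M ->
  forall l m, m \in nl_blk M (nl_d M).-1 l ->
  forall g, (g <= (nl_d M).-1)%N -> nl_blk M g m = nl_blk M g l.
Proof.
move=> hv l m hm g hg.
have hv' := hv; case: hv' => [[d0 c1 c2 c3] _].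
apply: c2; first by apply: leq_trans hg (leq_pred _).
exact: (subsetP (nest hv l g _ hg (leq_pred _)) m hm).
Qed.

Lemma Q_eq (R : realType) (n : nat) (M : nlmodel R n) : nl_valid M ->
  forall l m S, m \in nl_blk M (nl_d M).-1 l -> Qf M m S = Qf M l S.
Proof.
move=> hv l m S hm; apply: eq_bigr => h _.
by rewrite !(@blk_eq R n M hv l m hm) // ltnW.
Qed.

Lemma X_eq (R : realType) (n : nat) (M : nlmodel R n) : nl_valid M ->
  forall l S, chsum M (nl_d M).-1 (nl_blk M (nl_d M).-1 l) S =
     \sum_(m in nl_blk M (nl_d M).-1 l) vleaf M m S.
Proof.
move=> hv l S; have hv' := hv; case: hv' => [[d0 c1 c2 c3] [c4 c5 c6 c7]].
rewrite /chsum /children prednK //.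
rewrite (eq_imset _ c5) big_imset; last by move=> x y _ _ /set1_inj.
by apply: eq_bigr => m _; rewrite /vN subnn /= big_set1.
Qed.

Lemma phi_dec (R : realType) (n : nat) (M : nlmodel R n) : nl_valid M ->
  forall m S, phi M m S = Qf M m S *
     (vleaf M m S / chsum M (nl_d M).-1 (nl_blk M (nl_d M).-1 m) S).
Proof.
move=> hv m S; have hv' := hv; case: hv' => [[d0 c1 c2 c3] [c4 c5 c6 c7]].
have E : vN M (nl_d M) (nl_blk M (nl_d M) m) S = vleaf M m S.
  by rewrite /vN subnn /= c5 big_set1.
rewrite -E /phi /Qf.
move: d0; case: (nl_d M) => [//|d'] _.
by rewrite big_ord_recr.
Qed.

Lemma X_pos (R : realType) (n : nat) (M : nlmodel R n) : nl_valid M ->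
  forall l (S : {set 'I_n}), l \in S -> 0 < \sum_(m in nl_blk M (nl_d M).-1 l) vleaf M m S.
Proof.
move=> hv l S hl; have hv' := hv; case: hv' => [[d0 c1 c2 c3] [c4 c5 c6 c7]].
rewrite (bigD1 l) /=; last by apply: c1; apply: leq_pred.
have h1 : 0 < vleaf M l S by rewrite /vleaf hl c6.
have h2 : 0 <= \sum_(i in nl_blk M (nl_d M).-1 l | i != l) vleaf M i S.
  by apply: sumr_ge0 => i _; rewrite /vleaf; case: ifP => _ //; apply: ltW.
lra.
Qed.

Lemma PN_eq (R : realType) (n : nat) (M : nlmodel R n) : nl_valid M ->
  forall l (S : {set 'I_n}), l \in S -> PN M (nl_d M).-1 (nl_blk M (nl_d M).-1 l) S = Qf M l S.
Proof.
move=> hv l S hl; have hv' := hv; case: hv' => [[d0 c1 c2 c3] [c4 c5 c6 c7]].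
rewrite /PN.
set B := nl_blk M (nl_d M).-1 l.
set X := chsum M (nl_d M).-1 B S.
transitivity (\sum_(m in B :&: S) Qf M l S * (vleaf M m S / X)).
  apply: eq_bigr => m; rewrite in_setI => /andP[hm _].
  rewrite phi_dec // (@Q_eq R n M hv l m S hm) (c2 _ _ _ (leq_pred _) hm) //.
rewrite -big_distrr /= -big_distrl /=.
have -> : \sum_(i in B :&: S) vleaf M i S = X.
  rewrite /X X_eq // -/B [RHS](big_setID S) /= [X in _ = _ + X]big1 ?addr0 //.
  by move=> m; rewrite in_setD => /andP[hm _]; rewrite /vleaf (negbTE hm).
rewrite divff ?mulr1 //.
have := @X_pos R n M hv l S hl; rewrite -X_eq // -/B -/X => hX.
by rewrite gt_eqF.
Qed.

Lemma BF_gp (R : realType) (n : nat) (M : nlmodel R n) : nl_valid M ->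
  forall l (S : {set 'I_n}), l \in S -> BF M l S = gp_ratio M (nl_d M).-1 (nl_blk M (nl_d M).-1 l) S.
Proof.
move=> hv l S hl; have hv' := hv; case: hv' => [[d0 c1 c2 c3] [c4 c5 c6 c7]].
rewrite /BF /gp_ratio !PN_eq ?inE // !phi_dec //.
have hS := @X_pos R n M hv l S hl; have hT := @X_pos R n M hv l setT (in_setT l).
rewrite -!X_eq // in hS hT.
rewrite /vleaf hl in_setT.
set a := Qf M l S; set b := Qf M l setT.
set x := chsum M _ _ S in hS *; set y := chsum M _ _ setT in hT *.
have v0 : nl_v M l != 0 by rewrite gt_eqF.
have [->|b0] := eqVneq b 0; first by rewrite !mul0r invr0 !mulr0 mul0r.
field; apply/and4P; split => //; rewrite gt_eqF //.
Qed.

Unset Implicit Arguments.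

Theorem propositionD1 (R : realType) (n : nat) (M : nlmodel R n)
  (b : nat) (sigma : 'I_n -> {ffun 'I_(up_log b n) -> 'I_b}) :
  (2 <= n)%N -> (2 <= b)%N -> injective sigma ->
  nl_valid M ->
  general_position M (design sigma) ->
  forall S, S \in design sigma ->
  forall i j, i \in S -> j \in S ->
    (* (I): j is a child of N^par(i) = a_{d-1}(i) *)
    (j \in nl_blk M (nl_d M).-1 i -> BF M i S = BF M j S) /\
    (* (II) *)
    (j \notin nl_blk M (nl_d M).-1 i ->
     (exists2 k, k \in nl_blk M (nl_d M).-1 i & k \notin S) ->
     BF M i S != BF M j S).
Proof.
move=> _ _ _ hv hgp S hSd i j hi hj.
have hv' := hv; case: hv' => [[d0 c1 c2 c3] [c4 c5 c6 c7]].
rewrite !BF_gp //; split.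
  by move=> hji; rewrite (c2 _ _ _ (leq_pred _) hji).
move=> hji [k hk hkS].
have hjj : j \in nl_blk M (nl_d M).-1 j by apply: c1; apply: leq_pred.
have hii : i \in nl_blk M (nl_d M).-1 i by apply: c1; apply: leq_pred.
have dlt : ((nl_d M).-1 < nl_d M)%N by rewrite prednK.
apply: (hgp S hSd).
- by rewrite /is_internal dlt; apply/existsP; exists i.
- by rewrite /is_internal dlt; apply/existsP; exists j.
- by case=> E; move: hji; rewrite E hjj.
- by apply/set0Pn; exists i; rewrite inE hii hi.
- by apply/set0Pn; exists j; rewrite inE hjj hj.
- apply/orP; left; rewrite properE subsetIl /=.
  by apply/subsetPn; exists k => //; rewrite inE (negbTE hkS) andbF.
Qed.
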